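(* The relation $\ll_C$ on $\bar M$, defined by $\bar P \ll_C \bar Q$ if and only if $P^*\cap Q\neq\emptyset$, is a chronology on $\bar M$: it is transitive (if $\bar P\ll_C\bar Q$ and $\bar Q\ll_C\bar R$ then $\bar P\ll_C\bar R$) and irreflexive (there is no $\bar P\in\bar M$ with $\bar P\ll_C\bar P$).
   Context: Let $M$ be a strongly causal spacetime, i.e. a time-oriented Lorentzian manifold in which every point has a neighbourhood that no non-spacelike curve enters more than once. For $p,q\in M$ write $p\ll q$ if there is a future-directed timelike curve from $p$ to $q$. Set $I^+(p)=\{q:p\ll q\}$ and $I^-(p)=\{q:q\ll p\}$, and for $S\subset M$ set $I^\pm(S)=\bigcup_{s\in S}I^\pm(s)$. For a curve $\gamma$ (viewed as a point set) put $I^\pm[\gamma]=I^\pm(\gamma)$. A past-set is a set of the form $I^-(S)$ with $S\subset M$. An IP (indecomposable past-set) is a nonempty past-set that is not the union of two proper subsets which are themselves past-sets. Future-sets and IFs are defined dually. $\hat M$ is the set of IPs and $\check M$ the set of IFs. The IPs are exactly the sets $I^-[\gamma]$ for future-directed timelike curves $\gamma$, and dually for IFs. For an IP $P$, its common future is $f(P)=I^+(\{x\in M:P\subset I^-(x)\})$. For an IF $P^*$, its common past is $p(P^* )=I^-(\{x\in M:P^*\subset I^+(x)\})$. $R_{pf}\subset\hat M\times\check M$ is the set of pairs $(P,Q^* )$ satisfying both of the following: - $Q^*\subset f(P)$, and there is no IF $R^*\neq Q^*$ with $Q^*\subset R^*\subset f(P)$; - $P\subset p(Q^* )$, and there is no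 IP $R\neq P$ with $P\subset R\subset p(Q^* )$. The causal completion $\bar M$ is the set of pairs $\bar P=(P,P^* )$ such that one of the following holds: - (i) $(P,P^* )\in R_{pf}$; - (ii) $P=\emptyset$ and $P^*$ is an IF appearing in no pair of $R_{pf}$; - (iii) $P^*=\emptyset$ and $P$ is an IP appearing in no pair of $R_{pf}$. Elements of $\bar M$ are written $\bar P=(P,P^* )$, $\bar Q=(Q,Q^* )$, $\bar R=(R,R^* )$, and so on. *)

(* Defs.v *)
Set Implicit Arguments.
(* Lorentzian manifolds are not available; the causal
   completion only depends on the chronological relation << of M, so M is
   modelled as an abstract chronological set. *)

Section Chron.
Variable M : Type.
Variable chr : M -> M -> Prop.

Definition mset := M -> Prop.
Definition msubset (A B : mset) : Prop := forall x, A x -> B x.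
Definition munion (A B : mset) : mset := fun x => A x \/ B x.
Definition mempty : mset := fun _ => False.

Definition Iplus (p : M) : mset := fun q => chr p q.
Definition Iminus (p : M) : mset := fun q => chr q p.
Definition IplusS (S : mset) : mset := fun q => exists s, S s /\ chr s q.
Definition IminusS (S : mset) : mset := fun q => exists s, S s /\ chr q s.

Definition is_past_set (P : mset) : Prop := exists S, P = IminusS S.
Definition is_future_set (P : mset) : Prop := exists S, P = IplusS S.

Definition is_IP (P : mset) : Prop :=
  is_past_set P /\ (exists x, P x) /\
  ~ (exists A B, is_past_set A /\ is_past_set B /\
       msubset A P /\ msubset B P /\ A <> P /\ B <> P /\ P = munion A B).
Definition is_IF (P : mset) : Prop :=
  is_future_set P /\ (exists x, P x) /\
  ~ (exists A B, is_future_set A /\ is_future_set B /\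
       msubset A P /\ msubset B P /\ A <> P /\ B <> P /\ P = munion A B).

Definition cfut (P : mset) : mset := IplusS (fun x => msubset P (Iminus x)).
Definition cpast (P : mset) : mset := IminusS (fun x => msubset P (Iplus x)).

Definition Rpf (P Q : mset) : Prop :=
  is_IP P /\ is_IF Q /\
  (msubset Q (cfut P) /\
     forall R, is_IF R -> R <> Q -> ~ (msubset Q R /\ msubset R (cfut P))) /\
  (msubset P (cpast Q) /\
     forall R, is_IP R -> R <> P -> ~ (msubset P R /\ msubset R (cpast Q))).

Definition in_Mbar (Pb : mset * mset) : Prop :=
  let (P, Ps) := Pb in
  Rpf P Ps \/
  (P = mempty /\ is_IF Ps /\ forall X, ~ Rpf X Ps) \/
  (Ps = mempty /\ is_IP P /\ forall X, ~ Rpf P X).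

Definition chronC (Pb Qb : mset * mset) : Prop :=
  exists x, snd Pb x /\ fst Qb x.

End Chron.

(* Properties of the chronological relation of a strongly causal spacetime
   used here as the abstract hypotheses on (M, <<). *)
Definition chron_axioms (M : Type) (chr : M -> M -> Prop) : Prop :=
  (forall x y z, chr x y -> chr y z -> chr x z) /\
  (forall x, ~ chr x x) /\
  (forall x y, chr x y -> exists z, chr x z /\ chr z y) /\
  (forall x, exists y, chr x y) /\ (forall x, exists y, chr y x) /\
  (forall x y, (forall z, chr z x <-> chr z y) -> x = y) /\
  (forall x y, (forall z, chr x z <-> chr y z) -> x = y).

(* Main.v *)
Require Import Defs.

Lemma mbar_rpf (M : Type) (chr : M -> M -> Prop) P Ps x y :
  in_Mbar chr (P, Ps) -> P x -> Ps y -> Rpf chr P Ps.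
Proof.
  intros [H|[[H _]|[H _]]] Hx Hy; auto.
  - subst; destruct Hx.
  - subst; destruct Hy.
Qed.

Lemma mbar_ip (M : Type) (chr : M -> M -> Prop) P Ps x :
  in_Mbar chr (P, Ps) -> P x -> is_IP chr P.
Proof.
  intros [H|[[H _]|[_ [H _]]]] Hx; auto.
  - destruct H as [H _]; exact H.
  - subst; destruct Hx.
Qed.

Theorem theorem2 (M : Type) (chr : M -> M -> Prop) (Hchr : @chron_axioms M chr) :
  (forall Pb Qb Rb : mset M * mset M,
      in_Mbar chr Pb -> in_Mbar chr Qb -> in_Mbar chr Rb ->
      chronC Pb Qb -> chronC Qb Rb -> chronC Pb Rb) /\
  (forall Pb : mset M * mset M, in_Mbar chr Pb -> ~ chronC Pb Pb).
Proof.
  destruct Hchr as [Htr [Hirr _]].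
  split.
  - intros [P Ps] [Q Qs] [R Rs] HP HQ HR [x [Hx1 Hx2]] [y [Hy1 Hy2]].
    simpl in *.
    pose proof (@mbar_rpf M chr _ _ _ _ HQ Hx2 Hy1) as [_ [_ [[Hsub _] _]]].
    destruct (Hsub y Hy1) as [z [Hz Hzy]].
    pose proof (@mbar_ip M chr _ _ _ HR Hy2) as [[S HS] _].
    rewrite HS in Hy2 |- *.
    destruct Hy2 as [s [Hs Hys]].
    exists x; split; auto.
    exists s; split; auto.
    apply Htr with y; auto. apply Htr with z; auto. apply Hz; auto.
  - intros [P Ps] HP [x [Hx1 Hx2]]; simpl in *.
    pose proof (@mbar_rpf M chr _ _ _ _ HP Hx2 Hx1) as [_ [_ [[Hsub _] _]]].
    destruct (Hsub x Hx1) as [z [Hz Hzx]].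
    apply (Hirr x). apply Htr with z; auto. apply Hz; auto.
Qed.
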